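(* For every integer $n>0$, $\mathrm{DE1}(n)+\mathrm{DE1}(n-1)$ equals the number of partitions of $n$ into parts none of which is divisible by $4$.
   Context: For a nonnegative integer $n$, $\mathrm{DE1}(n)$ denotes the number of partitions of $n$ in which no even part is repeated and the largest part is odd (so the empty partition is not counted and $\mathrm{DE1}(0)=0$). Equivalently, $\sum_{n\ge0}\mathrm{DE1}(n)q^n=\sum_{n\ge0}\frac{(-q^2;q^2)_n q^{2n+1}}{(q;q^2)_{n+1}}$, where $(a;q)_n=\prod_{j=0}^{n-1}(1-aq^j)$. *)

(* Defs.v *)
From mathcomp Require Import all_boot.
Set Implicit Arguments. Unset Strict Implicit. Unset Printing Implicit Defensive.

(* A partition of n is encoded by its multiplicity function:
   m k = number of times the part k occurs (1 <= k <= n).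
   Multiplicities are at most n, so 'I_n.+1 suffices; part 0 is forbidden. *)
Definition mult_partition (n : nat) (m : {ffun 'I_n.+1 -> 'I_n.+1}) : bool :=
  (m ord0 == 0 :> nat) && (\sum_(k < n.+1) k * m k == n).

Definition no_even_repeated (n : nat) (m : {ffun 'I_n.+1 -> 'I_n.+1}) : bool :=
  [forall k : 'I_n.+1, ~~ odd k ==> (m k <= 1)].

Definition largest_part_odd (n : nat) (m : {ffun 'I_n.+1 -> 'I_n.+1}) : bool :=
  [exists k : 'I_n.+1, [&& 0 < m k, odd k &
     [forall j : 'I_n.+1, (k < j) ==> (m j == 0 :> nat)]]].

Definition no_part_div4 (n : nat) (m : {ffun 'I_n.+1 -> 'I_n.+1}) : bool :=
  [forall k : 'I_n.+1, (4 %| k) ==> (m k == 0 :> nat)].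

Definition DE1 (n : nat) : nat :=
  #|[set m : {ffun 'I_n.+1 -> 'I_n.+1} |
       [&& mult_partition m, no_even_repeated m & largest_part_odd m]]|.

Definition p_no4 (n : nat) : nat :=
  #|[set m : {ffun 'I_n.+1 -> 'I_n.+1} | mult_partition m && no_part_div4 m]|.

(* Main.v *)
Require Import Defs.
From mathcomp Require Import all_boot zify.
From Stdlib Require Import FunctionalExtensionality.
Set Implicit Arguments. Unset Strict Implicit. Unset Printing Implicit Defensive.

Definition dec n (m : {ffun 'I_n.+1 -> 'I_n.+1}) : nat -> nat :=
  fun k => if k < n.+1 then (m (inord k) : nat) else 0.
Definition enc n (g : nat -> nat) : {ffun 'I_n.+1 -> 'I_n.+1} :=
  [ffun k : 'I_n.+1 => inord (g k)].

Definition sup n (g : nat -> nat) := forall k, n < k -> g k = 0.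
Definition bnd n (g : nat -> nat) := sup n g /\ (forall k, g k <= n).

Lemma dec_ord n (m : {ffun 'I_n.+1 -> 'I_n.+1}) (k : 'I_n.+1) : dec m k = m k.
Proof. by rewrite /dec ltn_ord inord_val. Qed.

Lemma enc_dec n (m : {ffun 'I_n.+1 -> 'I_n.+1}) : enc n (dec m) = m.
Proof. apply/ffunP=> k; apply: val_inj; rewrite ffunE dec_ord /= inordK //. Qed.

Lemma dec_bnd n (m : {ffun 'I_n.+1 -> 'I_n.+1}) : bnd n (dec m).
Proof.
split=> k; rewrite /dec.
  by move=> Hk; rewrite ltnNge Hk.
by case: ifP=> // _; rewrite -ltnS.
Qed.

Lemma dec_enc n g : bnd n g -> @dec n (enc n g) = g.
Proof.
move=> [Hs Hv]; apply: functional_extensionality => k; rewrite /dec.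
case: ifP=> Hk.
  by rewrite ffunE /= inordK // inordK // ltnS.
by rewrite Hs // leqNgt Hk.
Qed.

Lemma card_le n1 n2 (P1 P2 : (nat -> nat) -> bool) (F G : (nat -> nat) -> nat -> nat) :
  (forall g, bnd n1 g -> P1 g -> bnd n2 (F g) /\ P2 (F g)) ->
  (forall g, bnd n1 g -> P1 g -> G (F g) = g) ->
  #|[set m : {ffun 'I_n1.+1 -> 'I_n1.+1} | P1 (dec m)]|
    <= #|[set m : {ffun 'I_n2.+1 -> 'I_n2.+1} | P2 (dec m)]|.
Proof.
move=> HF HG.
set A := [set m | _]; set B := [set m | _].
pose f := fun m : {ffun 'I_n1.+1 -> 'I_n1.+1} => enc n2 (F (dec m)).
have inj : {in A &, injective f}.
  move=> x y; rewrite !inE => Px Py /(congr1 (@dec n2)).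
  have [bx _] := HF _ (dec_bnd x) Px; have [by_ _] := HF _ (dec_bnd y) Py.
  rewrite !dec_enc // => /(congr1 G).
  rewrite (HG _ (dec_bnd x) Px) (HG _ (dec_bnd y) Py) => E.
  by rewrite -(enc_dec x) -(enc_dec y) E.
rewrite -(card_in_imset inj); apply: subset_leq_card.
apply/subsetP=> y /imsetP [x]; rewrite inE => Px ->.
have [b P] := HF _ (dec_bnd x) Px.
by rewrite inE /f dec_enc.
Qed.

Lemma card_eq n1 n2 (P1 P2 : (nat -> nat) -> bool) (F G : (nat -> nat) -> nat -> nat) :
  (forall g, bnd n1 g -> P1 g -> bnd n2 (F g) /\ P2 (F g)) ->
  (forall g, bnd n2 g -> P2 g -> bnd n1 (G g) /\ P1 (G g)) ->
  (forall g, bnd n1 g -> P1 g -> G (F g) = g) ->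
  (forall g, bnd n2 g -> P2 g -> F (G g) = g) ->
  #|[set m : {ffun 'I_n1.+1 -> 'I_n1.+1} | P1 (dec m)]|
    = #|[set m : {ffun 'I_n2.+1 -> 'I_n2.+1} | P2 (dec m)]|.
Proof.
move=> H1 H2 H3 H4; apply/eqP; rewrite eqn_leq.
by rewrite (card_le H1 H3) (card_le H2 H4).
Qed.

Definition wt N (g : nat -> nat) := \sum_(k < N) k * g k.

Lemma sum_ext (G : nat -> nat) R M : R <= M -> (forall j, R <= j -> G j = 0) ->
  \sum_(j < M) G j = \sum_(j < R) G j.
Proof.
move=> HRM HG; elim: M HRM => [|M IH]; first by rewrite leqn0 => /eqP ->.
rewrite leq_eqVlt => /orP [/eqP -> //| HR].
by rewrite big_ord_recr /= IH // HG // addn0.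
Qed.

Lemma sum_split2 (G : nat -> nat) M :
  \sum_(j < M.*2) G j = \sum_(j < M) G j.*2.+1 + \sum_(j < M) G j.*2.
Proof.
elim: M => [|M IH]; first by rewrite !big_ord0.
rewrite doubleS !big_ord_recr /= IH; set A := \sum_(j < M) _; set B := \sum_(j < M) _; lia.
Qed.

Lemma sum_split (G : nat -> nat) R : (forall j, R <= j -> G j = 0) ->
  \sum_(j < R) G j = \sum_(j < R) G j.*2.+1 + \sum_(j < R) G j.*2.
Proof.
move=> HG; rewrite -sum_split2 (@sum_ext _ R) //; lia.
Qed.

Lemma term_le N g k : k < N -> k * g k <= wt N g.
Proof.
move=> Hk; rewrite /wt (bigD1 (Ordinal Hk)) //=; exact: leq_addr.
Qed.

Definition valid n g := (g 0 == 0) && (wt n.+1 g == n).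

Lemma term_le_n n g k : sup n g -> valid n g -> k * g k <= n.
Proof.
move=> Hs /andP [_ /eqP <-]; case: (ltnP n k) => Hk.
  by rewrite Hs // muln0.
by apply: term_le.
Qed.

Lemma valid_bnd n g : sup n g -> valid n g -> bnd n g.
Proof.
move=> Hs Hv; split=> // k; case: k => [|k]; first by move: Hv => /andP [/eqP -> _].
by apply: leq_trans (term_le_n k.+1 Hs Hv); rewrite leq_pmull.
Qed.

Definition nerp n (g : nat -> nat) := [forall k : 'I_n.+1, ~~ odd k ==> (g k <= 1)].
Definition lpop n (g : nat -> nat) := [exists k : 'I_n.+1, [&& 0 < g k, odd k &
     [forall j : 'I_n.+1, (k < j) ==> (g j == 0)]]].
Definition no4p n (g : nat -> nat) := [forall k : 'I_n.+1, (4 %| k) ==> (g k == 0)].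

Lemma nerpP n g : sup n g -> reflect (forall k, ~~ odd k -> g k <= 1) (nerp n g).
Proof.
move=> Hs; apply: (iffP forallP) => H k.
  case: (ltnP n k) => Hk; first by rewrite Hs.
  by move: (H (Ordinal (Hk : k < n.+1))) => /implyP.
by apply/implyP; apply: H.
Qed.

Lemma no4pP n g : sup n g -> reflect (forall k, 4 %| k -> g k = 0) (no4p n g).
Proof.
move=> Hs; apply: (iffP forallP) => H k.
  case: (ltnP n k) => Hk; first by rewrite Hs.
  by move: (H (Ordinal (Hk : k < n.+1))) => /implyP Hi /Hi /eqP.
by apply/implyP => /H ->.
Qed.

Fixpoint lp (g : nat -> nat) (N : nat) : nat :=
  match N with 0 => 0 | N'.+1 => if 0 < g N' then N' else lp g N' end.

Lemma lp_spec g N : (exists k, k < N /\ 0 < g k) ->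
  [/\ lp g N < N, 0 < g (lp g N) & forall j, lp g N < j < N -> g j = 0].
Proof.
elim: N => [[k [//]]|N IH] [k [Hk Hg]] /=.
case: ifP => H.
  split=> // j /andP [H1 H2]; lia.
have H' : k < N.
  rewrite ltnS leq_eqVlt in Hk; case/orP: Hk => // /eqP E.
  by rewrite -E Hg in H.
have [h1 h2 h3] := IH (ex_intro _ k (conj H' Hg)).
split=> //; first by apply: ltnW.
move=> j /andP [H1 H2]; rewrite ltnS leq_eqVlt in H2; case/orP: H2 => [/eqP ->|H2].
  by apply/eqP; rewrite -leqn0 leqNgt H.
by apply: h3; rewrite H1.
Qed.

Lemma lp_eq g N K : K < N -> 0 < g K -> (forall j, K < j < N -> g j = 0) -> lp g N = K.
Proof.
move=> HK Hg Hj; have [h1 h2 h3] := lp_spec (ex_intro _ K (conj HK Hg)).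
case: (ltngtP (lp g N) K) => // H.
  by move: Hg; rewrite h3 // H.
by move: h2; rewrite Hj // H.
Qed.

Lemma lpopE n g : sup n g -> (exists k, k < n.+1 /\ 0 < g k) -> lpop n g = odd (lp g n.+1).
Proof.
move=> Hs Hex; have [h1 h2 h3] := lp_spec Hex.
apply/existsP/idP.
  case=> k /and3P [Hk Ho /forallP Hf].
  rewrite (@lp_eq g n.+1 k) //.
  move=> j /andP [H1 H2]; move: (Hf (Ordinal H2)) => /implyP /(_ H1) /eqP //.
move=> Ho; exists (Ordinal h1); rewrite h2 Ho /=; apply/forallP => j; apply/implyP => Hj.
by apply/eqP; apply: h3; rewrite Hj ltn_ord.
Qed.

Definition upd (g : nat -> nat) a v := fun k => if k == a then v else g k.

Lemma wt_upd N g a v : a < N -> wt N (upd g a v) + a * g a = wt N g + a * v.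
Proof.
move=> Ha; rewrite /wt (bigD1 (Ordinal Ha)) //= [in RHS](bigD1 (Ordinal Ha)) //=.
rewrite /upd eqxx.
rewrite (eq_bigr (fun i : 'I_N => i * g i)); first by lia.
move=> i Hi; rewrite ifF //; apply/negbTE; apply: contra Hi => /eqP E.
by apply/eqP; apply: val_inj.
Qed.

Lemma pos_of_wt n g : 0 < n -> valid n g -> exists k, k < n.+1 /\ 0 < g k.
Proof.
move=> Hn /andP [_ /eqP Hw].
case: (boolP [exists k : 'I_n.+1, 0 < g k]) => [/existsP [k Hk]|H].
  by exists k; split.
move: Hw; rewrite /wt big1 => [E|k _]; first by rewrite -E in Hn.
 move: H; rewrite negb_exists => /forallP /(_ k); rewrite lt0n negbK => /eqP ->.
by rewrite muln0.
Qed.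

Definition F1 p g := let K := lp g p.+1 in upd (upd g K (g K).-1) K.+1 1.
Definition G1 n h := let K := lp h n.+1 in upd (upd h K 0) K.-1 (h K.-1).+1.

Lemma wt_ext p g : sup p g -> wt p.+2 g = wt p.+1 g.
Proof.
move=> Hs; rewrite /wt (@sum_ext (fun k => k * g k) p.+1) // => j Hj.
by rewrite Hs // muln0.
Qed.

Lemma DE1_facts p g : bnd p g -> lpop p g ->
  [/\ lp g p.+1 < p.+1, 0 < g (lp g p.+1), odd (lp g p.+1) &
      forall j, lp g p.+1 < j -> g j = 0].
Proof.
move=> [Hs Hv] Hl.
have Hex : exists k, k < p.+1 /\ 0 < g k.
  by case/existsP: Hl => k /and3P [H1 _ _]; exists k.
have [h1 h2 h3] := lp_spec Hex.
split=> //; first by rewrite -lpopE.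
move=> j Hj; case: (ltnP p j) => Hjp; first by rewrite Hs.
by apply: h3; rewrite Hj ltnS.
Qed.

Lemma lp_F1 p g : bnd p g -> lpop p g -> lp (F1 p g) p.+2 = (lp g p.+1).+1.
Proof.
move=> Hb Hl; have [h1 h2 h3 h4] := DE1_facts Hb Hl.
apply: lp_eq => //; first by rewrite /F1 /upd eqxx.
move=> j /andP [Hj _]; rewrite /F1 /upd.
rewrite ifF; last by apply/negbTE; rewrite neq_ltn Hj orbT.
rewrite ifF; last by apply/negbTE; rewrite neq_ltn (ltn_trans _ Hj) // orbT.
by apply: h4; apply: ltn_trans Hj.
Qed.

Definition PA p g := [&& valid p g, nerp p g & lpop p g].
Definition PB n g := [&& valid n g, nerp n g & ~~ lpop n g].

Lemma F1_ok p g : bnd p g -> PA p g -> bnd p.+1 (F1 p g) /\ PB p.+1 (F1 p g).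
Proof.
move=> Hb /and3P [Hval Hner Hl].
have [h1 h2 h3 h4] := DE1_facts Hb Hl.
have [Hs Hv] := Hb.
set K := lp g p.+1 in h1 h2 h3 h4.
have Hsup : sup p.+1 (F1 p g).
  move=> k Hk; rewrite /F1 -/K /upd.
  rewrite ifF; last by apply/negbTE/eqP; move: h1 Hk; lia.
  rewrite ifF; last by apply/negbTE/eqP; move: h1 Hk; lia.
  by apply: Hs; apply: ltnW.
have HK0 : K != 0 by apply: contraTneq h3 => ->.
have Hvalid : valid p.+1 (F1 p g).
  apply/andP; split.
    rewrite /F1 -/K /upd /= ifF; last by apply/negbTE; rewrite eq_sym.
    by move: Hval => /andP [].
  move: Hval => /andP [_ /eqP Hw].
  have E1 := @wt_upd p.+2 (upd g K (g K).-1) K.+1 1 (h1 : K.+1 < p.+2).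
  have E2 := @wt_upd p.+2 g K (g K).-1 (ltn_trans h1 (ltnSn _)).
  have E3 : upd g K (g K).-1 K.+1 = 0.
    by rewrite /upd ifF; [apply: h4|apply/negbTE; rewrite neq_ltn ltnSn orbT].
  rewrite E3 in E1; rewrite (@wt_ext p g Hs) Hw in E2.
  have E4 : K * g K = K * (g K).-1 + K by rewrite -mulnSr prednK.
  rewrite /F1 -/K; apply/eqP; lia.
split; first by apply: valid_bnd.
rewrite /PB Hvalid /=; apply/andP; split.
  apply/(nerpP Hsup) => k Hk; rewrite /F1 -/K /upd.
  case: ifP => // _; case: ifP => [/eqP E|_]; first by rewrite E h3 in Hk.
  by move/(nerpP Hs): Hner; apply.
rewrite (@lpopE p.+1 _ Hsup); last first.
  by exists K.+1; split => //; rewrite /F1 -/K /upd eqxx.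
by rewrite lp_F1 //= h3.
Qed.

Lemma DE2_facts n h : bnd n h -> 0 < n -> valid n h -> nerp n h -> ~~ lpop n h ->
  [/\ lp h n.+1 < n.+1, h (lp h n.+1) = 1, ~~ odd (lp h n.+1), 1 < lp h n.+1 &
      forall j, lp h n.+1 < j -> h j = 0].
Proof.
move=> [Hs Hv] Hn Hval Hner Hl.
have Hex := pos_of_wt Hn Hval.
have [h1 h2 h3] := lp_spec Hex.
have Ho : ~~ odd (lp h n.+1) by rewrite -lpopE.
have H0 : lp h n.+1 != 0.
  by apply: contraTneq h2 => ->; move: Hval => /andP [/eqP -> _].
split=> //.
- move/(nerpP Hs): Hner => /(_ _ Ho); move: h2; lia.
- by move: H0 Ho; case: (lp h n.+1) => [|[|]].
move=> j Hj; case: (ltnP n j) => Hjp; first by rewrite Hs.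
by apply: h3; rewrite Hj ltnS.
Qed.

Lemma G1_ok p h : bnd p.+1 h -> PB p.+1 h -> bnd p (G1 p.+1 h) /\ PA p (G1 p.+1 h).
Proof.
move=> Hb /and3P [Hval Hner Hl].
have [h1 h2 h3 h4 h5] := DE2_facts Hb (ltn0Sn _) Hval Hner Hl.
have [Hs Hv] := Hb.
set K := lp h p.+2 in h1 h2 h3 h4 h5.
have HKK : (K.-1 == K) = false by apply/negbTE/eqP; move: h4; lia.
have Hsup : sup p (G1 p.+1 h).
  move=> k Hk; rewrite /G1 -/K /upd.
  rewrite ifF; last by apply/negbTE/eqP; move: h1 Hk; lia.
  case: ifP => // /eqP HkK; apply: h5; move: h1 Hk HkK; lia.
have Hvalid : valid p (G1 p.+1 h).
  apply/andP; split.
    rewrite /G1 -/K /upd /= ifF; last by apply/negbTE/eqP; move: h4; lia.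
    rewrite ifF; last by apply/negbTE/eqP; move: h4; lia.
    by move: Hval => /andP [].
  move: Hval => /andP [_ /eqP Hw].
  have E1 := @wt_upd p.+2 (upd h K 0) K.-1 (h K.-1).+1 (leq_ltn_trans (leq_pred _) h1).
  have E2 := @wt_upd p.+2 h K 0 h1.
  have E3 : upd h K 0 K.-1 = h K.-1 by rewrite /upd HKK.
  rewrite E3 Hw h2 in E1 E2.
  have E4 : K.-1 * (h K.-1).+1 = K.-1 * h K.-1 + K.-1 by rewrite mulnSr.
  rewrite -wt_ext //; rewrite /G1 -/K; apply/eqP; move: h4 h1; lia.
split; first by apply: valid_bnd.
have HoK1 : odd K.-1 by move: h3 h4; case: (K) => [|k] //= /negbNE.
rewrite /PA Hvalid /=; apply/andP; split.
  apply/(nerpP Hsup) => k Hk; rewrite /G1 -/K /upd.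
  case: ifP => [/eqP E|_]; first by rewrite E HoK1 in Hk.
  case: ifP => // _.
  by move/(nerpP Hs): Hner; apply.
rewrite (@lpopE p _ Hsup); last first.
  exists K.-1; split; first by move: h1 h4; lia.
  by rewrite /G1 -/K /upd eqxx.
rewrite (@lp_eq _ _ K.-1) //.
- by move: h1 h4; lia.
- by rewrite /G1 -/K /upd eqxx.
move=> j /andP [Hj1 Hj2]; rewrite /G1 -/K /upd.
rewrite ifF; last by apply/negbTE; rewrite neq_ltn Hj1 orbT.
case: ifP => // /eqP HjK; apply: h5; move: Hj1 HjK h4; lia.
Qed.

Lemma G1F1 p g : bnd p g -> PA p g -> G1 p.+1 (F1 p g) = g.
Proof.
move=> Hb /and3P [Hval Hner Hl].
have [h1 h2 h3 h4] := DE1_facts Hb Hl.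
set K := lp g p.+1 in h1 h2 h3 h4.
rewrite /G1 lp_F1 // -/K /=.
apply: functional_extensionality => k; rewrite /F1 -/K /upd.
case: (eqVneq k K) => [->|HkK].
  rewrite eqxx ifF; last by apply/negbTE; rewrite neq_ltn ltnSn.
  by rewrite prednK.
case: (eqVneq k K.+1) => [->|HkK1]; first by rewrite h4.
done.
Qed.

Lemma F1G1 p h : bnd p.+1 h -> PB p.+1 h -> F1 p (G1 p.+1 h) = h.
Proof.
move=> Hb HB; have [Hb' HA] := G1_ok Hb HB.
move: HB => /and3P [Hval Hner Hl].
have [h1 h2 h3 h4 h5] := DE2_facts Hb (ltn0Sn _) Hval Hner Hl.
set K := lp h p.+2 in h1 h2 h3 h4 h5.
have HKK : (K.-1 == K) = false by apply/negbTE/eqP; move: h4; lia.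
have Hlp : lp (G1 p.+1 h) p.+1 = K.-1.
  move: HA => /and3P [_ _ Hl'].
  have [g1 g2 g3 g4] := DE1_facts Hb' Hl'.
  apply: lp_eq => //.
  - by move: h1 h4; lia.
  - by rewrite /G1 -/K /upd eqxx.
  move=> j /andP [Hj1 Hj2]; rewrite /G1 -/K /upd.
  rewrite ifF; last by apply/negbTE; rewrite neq_ltn Hj1 orbT.
  case: ifP => // /eqP HjK; apply: h5; move: Hj1 HjK h4; lia.
rewrite /F1 Hlp prednK; last by move: h4; lia.
apply: functional_extensionality => k; rewrite /G1 -/K /upd.
case: (eqVneq k K) => [->|HkK]; first by rewrite h2.
case: (eqVneq k K.-1) => [->|HkK1]; first by rewrite eqxx.
done.
Qed.

Definition bit i x := x %/ 2 ^ i %% 2.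

Lemma bitS i x : bit i.+1 x = bit i (x %/ 2).
Proof. by rewrite /bit expnS divnMA. Qed.

Lemma bin_exp T x : x < 2 ^ T -> \sum_(i < T) 2 ^ i * bit i x = x.
Proof.
elim: T x => [|T IH] x Hx.
  by rewrite big_ord0; move: Hx; rewrite expn0; lia.
rewrite big_ord_recl /= expn0 mul1n.
rewrite (eq_bigr (fun i : 'I_T => 2 * (2 ^ i * bit i (x %/ 2)))); last first.
  by move=> i _; rewrite /bump /= add1n bitS expnS mulnA.
rewrite -big_distrr /= IH; first by rewrite /bit expn0 divn1; lia.
by rewrite ltn_divLR // -expnSr.
Qed.

Lemma bin_bits T (c : nat -> nat) : (forall j, c j <= 1) ->
  \sum_(j < T) 2 ^ j * c j < 2 ^ T /\
  forall i, i < T -> bit i (\sum_(j < T) 2 ^ j * c j) = c i.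
Proof.
elim: T c => [|T IH] c Hc.
  by rewrite big_ord0; split.
have [IH1 IH2] := IH (fun j => c j.+1) (fun j => Hc j.+1).
rewrite big_ord_recl /= expn0 mul1n.
rewrite (eq_bigr (fun i : 'I_T => 2 * (2 ^ i * c i.+1))); last first.
  by move=> i _; rewrite /bump /= add1n expnS mulnA.
rewrite -big_distrr /=.
set S := \sum_(i < T) _ in IH1 IH2 *.
have H0 := Hc 0.
split; first by rewrite expnS; lia.
case=> [|i] Hi.
  by rewrite /bit expn0 divn1; lia.
rewrite bitS.
have -> : (c 0 + 2 * S) %/ 2 = S by lia.
by apply: IH2.
Qed.

Definition F2 n (g : nat -> nat) k :=
  if odd k then g k else if k %% 4 == 2 then \sum_(i < n) 2 ^ i * g (2 ^ i * k) else 0.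
Definition G2 (h : nat -> nat) k :=
  if odd k then h k else if k == 0 then 0
  else bit (logn 2 k).-1 (h (2 * (k %/ 2 ^ (logn 2 k)))).

Lemma G2_eval h i b : odd b -> G2 h (2 ^ i.+1 * b) = bit i (h (2 * b)).
Proof.
move=> Hb; have b0 : 0 < b by case: b Hb.
rewrite /G2 oddM oddX /=.
rewrite ifF; last by rewrite muln_eq0 expn_eq0 /=; case: b b0 Hb.
rewrite lognM ?expn_gt0 // pfactorK // logn_coprime ?coprime2n // addn0.
by rewrite mulKn ?expn_gt0.
Qed.

Lemma decomp k : 0 < k -> exists i b, odd b /\ k = 2 ^ i * b.
Proof.
move=> Hk; have [m Hm E] := @pfactor_coprime 2 k isT Hk.
by exists (logn 2 k), m; rewrite -coprime2n mulnC.
Qed.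

Lemma ltn_pow2 n T : n <= T -> n < 2 ^ T.
Proof. move=> H; exact: leq_ltn_trans H (ltn_expl T (isT : 1 < 2)). Qed.

Definition Gi (f : nat -> nat) i j := 2 ^ i * j * f (2 ^ i * j).
Definition Oi n f i := \sum_(j < n.+1) Gi f i j.*2.+1.

Lemma Gi_step n f i : sup n f ->
  \sum_(j < n.+1) Gi f i j = Oi n f i + \sum_(j < n.+1) Gi f i.+1 j.
Proof.
move=> Hs; rewrite (@sum_split (Gi f i)) /Oi; last first.
  move=> j Hj; rewrite /Gi Hs ?muln0 //.
  by apply: leq_trans Hj (leq_pmull _ _); rewrite expn_gt0.
congr (_ + _); apply: eq_bigr => j _.
by rewrite /Gi -muln2 expnS; congr (_ * f _); lia.
Qed.

Lemma wt_dec n f : sup n f -> wt n.+1 f = \sum_(i < n.+2) Oi n f i.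
Proof.
move=> Hs.
have It : forall T, \sum_(j < n.+1) Gi f 0 j =
   \sum_(i < T) Oi n f i + \sum_(j < n.+1) Gi f T j.
  elim=> [|T IH]; first by rewrite big_ord0.
  by rewrite IH (@Gi_step n f T Hs) (@big_ord_recr _ _ _ T) /= addnA.
rewrite /wt (eq_bigr (fun j : 'I_n.+1 => Gi f 0 j)); last first.
  by move=> j _; rewrite /Gi expn0 !mul1n.
rewrite (It n.+2); suff -> : \sum_(j < n.+1) Gi f n.+2 j = 0 by rewrite addn0.
rewrite big1 // => j _.
rewrite /Gi; case: (nat_of_ord j) => [|j']; first by rewrite !muln0.
rewrite Hs ?muln0 //.
have H1 : n < 2 ^ n.+2 by apply: ltn_pow2; lia.
by apply: leq_trans H1 (leq_pmulr _ _).
Qed.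

Lemma F2_sup n g : sup n g -> sup n (F2 n g).
Proof.
move=> Hs k Hk; rewrite /F2; case: ifP => _; first by rewrite Hs.
case: ifP => // _; rewrite big1 // => i _.
rewrite Hs ?muln0 //; apply: leq_trans Hk (leq_pmull _ _); by rewrite expn_gt0.
Qed.

Lemma pow_mul2 l x : 2 ^ l * (2 * x) = 2 ^ l.+1 * x.
Proof. by rewrite mulnCA mulnA -expnS. Qed.

Lemma wt_F2 n g : sup n g -> wt n.+1 (F2 n g) = wt n.+1 g.
Proof.
move=> Hs; rewrite !wt_dec //; last exact: F2_sup.
rewrite [in LHS]big_ord_recl [in LHS]big_ord_recl [in RHS]big_ord_recl [in RHS]big_ord_recr /=.
have Z1 : Oi n g n.+1 = 0.
  rewrite /Oi big1 // => j _; rewrite /Gi Hs ?muln0 //.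
  have H1 : n < 2 ^ n.+1 by apply: ltn_pow2; lia.
  by apply: leq_trans H1 (leq_pmulr _ _).
have Z2 : \sum_(i < n) Oi n (F2 n g) (bump 0 (bump 0 i)) = 0.
  rewrite big1 // => i _; rewrite /Oi big1 // => j _.
  rewrite /Gi /F2 /bump /= !add1n oddM oddX /= ifF.
    by rewrite muln0.
  by rewrite !expnS mulnA -mulnA; apply/negbTE; rewrite mulnC modnMl.
rewrite Z1 Z2 !addn0.
have E0 : Oi n (F2 n g) 0 = Oi n g 0.
  apply: eq_bigr => j _; rewrite /Gi /F2 expn0 !mul1n.
  by rewrite ifT //= odd_double.
rewrite E0; congr (_ + _).
rewrite /Oi [in RHS]exchange_big /=; apply: eq_bigr => j _.
rewrite /Gi /F2 expn1 oddM /=.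
rewrite ifT; last by apply/eqP; lia.
rewrite big_distrr /=; apply: eq_bigr => i _.
rewrite /bump /= add1n pow_mul2 expnS; lia.
Qed.

Definition PD n g := valid n g && nerp n g.
Definition PN n g := valid n g && no4p n g.

Lemma odd_dvd4 k : 4 %| k -> odd k = false.
Proof. by move=> H; apply/negbTE; rewrite -dvdn2; apply: dvdn_trans H. Qed.

Lemma F2_ok n g : bnd n g -> PD n g -> bnd n (F2 n g) /\ PN n (F2 n g).
Proof.
move=> [Hs Hv] /andP [Hval Hner].
have Hsup := F2_sup Hs.
have Hvalid : valid n (F2 n g).
  apply/andP; split; first by [].
  by rewrite wt_F2 //; move: Hval => /andP [].
split; first by apply: valid_bnd.
rewrite /PN Hvalid /=; apply/(no4pP Hsup) => k Hk.
by rewrite /F2 odd_dvd4 //; move: Hk; rewrite /dvdn => /eqP ->.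
Qed.

Lemma F2G2 n h : bnd n h -> PN n h -> F2 n (G2 h) = h.
Proof.
move=> [Hs Hv] /andP [Hval Hno].
apply: functional_extensionality => k; rewrite /F2.
case: ifP => Ho; first by rewrite /G2 Ho.
have Hk2 : k %% 2 = 0 by rewrite modn2 Ho.
case: ifP => H4.
  have E : k = 2 * (k %/ 2) by move/eqP: H4; lia.
  have Hb : odd (k %/ 2).
    have : (k %/ 2) %% 2 = 1 by move/eqP: H4; lia.
    by rewrite modn2; case: odd.
  rewrite [in RHS]E -(@bin_exp n (h (2 * (k %/ 2)))); last first.
    by apply: leq_ltn_trans (Hv _) _; apply: ltn_pow2.
  apply: eq_bigr => i _; congr (_ * _).
  by rewrite [in X in G2 _ X]E pow_mul2 G2_eval.
apply/esym/(no4pP Hs Hno); rewrite /dvdn; apply/eqP; move/negbT: H4; lia.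
Qed.

Lemma G2_ok n h : bnd n h -> PN n h -> bnd n (G2 h) /\ PD n (G2 h).
Proof.
move=> Hb HN; have E := F2G2 Hb HN.
move: HN => /andP [Hval Hno]; have [Hs Hv] := Hb.
have Hsup : sup n (G2 h).
  move=> k Hk; case Ho: (odd k); first by rewrite /G2 Ho Hs.
  case: (posnP k) => [->|Hk']; first by [].
  have [i [b [Hb' Ek]]] := decomp Hk'.
  case: i Ek => [|i] Ek; first by rewrite Ek mul1n Hb' in Ho.
  rewrite Ek in Hk *; rewrite G2_eval //.
  have b0 : 0 < b by case: b Hb' {Ek Hk}.
  have H1 := term_le_n (2 * b) Hs Hval.
  have H2 : h (2 * b) < 2 ^ i.
    rewrite -(ltn_pmul2l (_ : 0 < 2 * b)); last by rewrite muln_gt0.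
    apply: leq_ltn_trans H1 _; apply: leq_trans Hk _.
    by rewrite expnS; lia.
  by rewrite /bit divn_small.
have Hvalid : valid n (G2 h).
  apply/andP; split; first by [].
  by rewrite -wt_F2 // E; move: Hval => /andP [].
split; first by apply: valid_bnd.
rewrite /PD Hvalid /=; apply/(nerpP Hsup) => k Hk.
rewrite /G2 (negbTE Hk); case: ifP => // _.
by rewrite /bit -ltnS ltn_mod.
Qed.

Lemma G2F2 n g : bnd n g -> PD n g -> G2 (F2 n g) = g.
Proof.
move=> [Hs Hv] /andP [Hval Hner].
apply: functional_extensionality => k.
case Ho : (odd k); first by rewrite /G2 /F2 Ho.
case: (posnP k) => [->|Hk]; first by rewrite /G2 /=; move: Hval => /andP [/eqP ->].
have [i [b [Hb' Ek]]] := decomp Hk.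
have b0 : 0 < b by case: b Hb' {Ek}.
case: i Ek => [|i] Ek; first by rewrite Ek mul1n Hb' in Ho.
rewrite Ek G2_eval // /F2 oddM /=.
rewrite ifT; last first.
  have : b %% 2 = 1 by rewrite modn2 Hb'.
  by move=> ?; apply/eqP; lia.
pose c := fun j => g (2 ^ j.+1 * b).
have Hc : forall j, c j <= 1.
  move=> j; move/(nerpP Hs): Hner; apply.
  by rewrite oddM oddX.
rewrite (eq_bigr (fun j : 'I_n => 2 ^ j * c j)); last first.
  by move=> j _; rewrite /c pow_mul2.
have [B1 B2] := bin_bits n Hc.
case: (ltnP i n) => Hin; first by rewrite B2.
rewrite /bit divn_small; last first.
  by apply: leq_trans B1 _; rewrite leq_exp2l.
rewrite Hs //.
apply: leq_trans (ltn_pow2 (leqnn n)) _.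
apply: leq_trans (_ : 2 ^ i.+1 <= _); first by rewrite leq_exp2l //; lia.
by rewrite leq_pmulr.
Qed.

Lemma DE1E n : DE1 n = #|[set m : {ffun 'I_n.+1 -> 'I_n.+1} | PA n (dec m)]|.
Proof.
rewrite /DE1; apply: eq_card => m; rewrite !inE /PA /mult_partition /no_even_repeated
  /largest_part_odd /valid /nerp /lpop /wt.
congr [&& _ , _ & _].
- congr (_ && _).
    by rewrite -(dec_ord m ord0).
  by congr (_ == _); apply: eq_bigr => k _; rewrite dec_ord.
- by apply: eq_forallb => k; rewrite dec_ord.
apply: eq_existsb => k; rewrite dec_ord; congr [&& _, _ & _].
by apply: eq_forallb => j; rewrite dec_ord.
Qed.

Lemma p_no4E n : p_no4 n = #|[set m : {ffun 'I_n.+1 -> 'I_n.+1} | PN n (dec m)]|.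
Proof.
rewrite /p_no4; apply: eq_card => m; rewrite !inE /PN /mult_partition /no_part_div4
  /valid /no4p /wt.
congr (_ && _).
- congr (_ && _).
    by rewrite -(dec_ord m ord0).
  by congr (_ == _); apply: eq_bigr => k _; rewrite dec_ord.
by apply: eq_forallb => k; rewrite dec_ord.
Qed.

Theorem corollary1 (n : nat) : 0 < n -> DE1 n + DE1 n.-1 = p_no4 n.
Proof.
case: n => [//|p] _ /=.
rewrite p_no4E DE1E DE1E.
rewrite -(@card_eq p.+1 p.+1 (PD p.+1) (PN p.+1) (F2 p.+1) G2); last first.
- by move=> h Hb HN; apply: F2G2.
- by move=> g Hb HD; apply: G2F2.
- by move=> h Hb HN; apply: G2_ok.
- by move=> g Hb HD; apply: F2_ok.
rewrite (@card_eq p p.+1 (PA p) (PB p.+1) (F1 p) (G1 p.+1)); last first.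
- by move=> h Hb HB; apply: F1G1.
- by move=> g Hb HA; apply: G1F1.
- by move=> h Hb HB; apply: G1_ok.
- by move=> g Hb HA; apply: F1_ok.
rewrite -(cardsID [set m : {ffun 'I_p.+2 -> 'I_p.+2} | lpop p.+1 (dec m)]
                  [set m : {ffun 'I_p.+2 -> 'I_p.+2} | PD p.+1 (dec m)]).
congr (_ + _); apply: eq_card => m; rewrite !inE /PA /PB /PD.
  by case: (valid _ _); case: (nerp _ _); case: (lpop _ _).
by case: (valid _ _); case: (nerp _ _); case: (lpop _ _).
Qed.
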